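(* For every graph $G$ and integer $k$, every execution path of naive-fvs$(G,k,\emptyset)$ that leads to a solution satisfies $|F'|\le 3|V_-|$.
   Context: All graphs are finite, simple and undirected; $d_G(v)$ denotes the degree of $v$ in $G$, $G-S$ denotes deletion of a vertex set $S$, and $G[S]$ the induced subgraph. A feedback vertex set of $G$ is a set $V_-\subseteq V(G)$ such that $G-V_-$ is a forest. Algorithm naive-fvs$(G,k,F)$ (with $k$ an integer and $F\subseteq V(G)$ inducing a forest) returns a set of vertices or ``NO'' as follows (all choices among several candidates are arbitrary; degrees are in the current graph $G$): (0) If $k<0$ return NO; if $V(G)=\emptyset$ return $\emptyset$. (1) If some vertex $v$ has degree less than $2$, return naive-fvs$(G-\{v\},k,F\setminus\{v\})$. (2) If some $v\in V(G)\setminus F$ has two neighbors in the same connected component of $G[F]$, let $X=$ naive-fvs$(G-\{v\},k-1,F)$ and return $X\cup\{v\}$ (NO if $X$ is NO). (3) Pick $v\in V(G)\setminus F$ of maximum degree. (4) If $d(v)=2$: set $X=\emptyset$; while $G$ contains a cycle $C$, take any vertex $x$ of $C$ not in $F$, add $x$ to $X$ and delete $x$ from $G$; then return $X$ if $|X|\le k$, else NO. (5) Let $X=$ naive-fvs$(G-\{v\},k-1,F)$; if $X$ is not NO, return $X\cup\{v\}$. (6) Return naive-fvs$(G,k,F\cup\{v\})$. An execution path is a sequence of calls $c_0,c_1,\dots,c_t$ where $c_0=$ naive-fvs$(G,k,\emptyset)$; for each $j<t$, $c_{j+1}$ is the recursive call made by $c_j$ in step 1 or step 2, or, if $c_j$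 reaches step 5, either the call of step 5 or the call of step 6 (the latter considered even if the algorithm would not actually make it); and $c_t$ terminates in step 0 or step 4 without recursion. It leads to a solution if $c_t$ returns a set (not NO). $V_-$ denotes the set of vertices deleted along the path in step 2, in step 5 (when the path follows the step-5 call), and in the loop of step 4 of $c_t$; $F'$ denotes the set of vertices added to $F$ by step 6 (when the path follows the step-6 call). *)

(* Defs.v *)
From HB Require Import structures.
From mathcomp Require Import all_boot all_order all_algebra.
Set Implicit Arguments. Unset Strict Implicit. Unset Printing Implicit Defensive.
Import Order.TTheory GRing.Theory Num.Theory.

(* A finite simple graph is a symmetric irreflexive relation e on a finType T.
   The "current graph" of a call of naive-fvs is the induced subgraph
   G[V] for a vertex set V : {set T}; deleting vertices = shrinking V. *)
Section NaiveFVS.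
Variables (T : finType) (e : rel T).

Definition deg (V : {set T}) (v : T) : nat := #|[set u in V | e v u]|.

Definition Frel (V F : {set T}) : rel T :=
  [rel x y | [&& x \in V :&: F, y \in V :&: F & e x y]].

Definition two_nbrs (V F : {set T}) (v : T) : Prop :=
  exists x y, [/\ x != y, x \in V :&: F, y \in V :&: F, e v x && e v y
               & connect (Frel V F) x y].

Definition is_cycle (V : {set T}) (c : seq T) : bool :=
  [&& 2 < size c, all (mem V) c, cycle e c & uniq c].

(* the while-loop of step 4: starting from G[V], repeatedly delete a vertex
   not in F lying on some cycle, until acyclic; X is the set deleted *)
Inductive loop4 (F : {set T}) : {set T} -> {set T} -> Prop :=
| loop4_done V : (forall c, ~~ is_cycle V c) -> loop4 F V set0
| loop4_step V c x X : is_cycle V c -> x \in c -> x \notin F ->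
    loop4 F (V :\ x) X -> loop4 F V (x |: X).

Definition no_low (V : {set T}) : Prop := forall u, u \in V -> 1 < deg V u.
Definition no_two (V F : {set T}) : Prop :=
  forall u, u \in V :\: F -> ~ two_nbrs V F u.
Definition maxdeg (V F : {set T}) (v : T) : Prop :=
  v \in V :\: F /\ forall u, u \in V :\: F -> deg V u <= deg V v.

(* leads V k F Vm Fp : there is an execution path starting from the call
   naive-fvs(G[V], k, F) that leads to a solution, along which the set of
   deleted vertices (steps 2, 5, and loop of step 4) is Vm and the set of
   vertices added to F by step 6 is Fp. *)
Inductive leads : {set T} -> int -> {set T} -> {set T} -> {set T} -> Prop :=
| leads_empty V k F :
    (0 <= k)%R -> V = set0 -> leads V k F set0 set0
| leads_step1 V k F v Vm Fp :
    (0 <= k)%R -> V != set0 -> v \in V -> deg V v < 2 ->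
    leads (V :\ v) k (F :\ v) Vm Fp -> leads V k F Vm Fp
| leads_step2 V k F v Vm Fp :
    (0 <= k)%R -> V != set0 -> no_low V -> v \in V :\: F -> two_nbrs V F v ->
    leads (V :\ v) (k - 1)%R F Vm Fp -> leads V k F (v |: Vm) Fp
| leads_step4 V k F v X :
    (0 <= k)%R -> V != set0 -> no_low V -> no_two V F -> maxdeg V F v ->
    deg V v = 2 -> loop4 F V X -> (#|X|%:Z <= k)%R -> leads V k F X set0
| leads_step5 V k F v Vm Fp :
    (0 <= k)%R -> V != set0 -> no_low V -> no_two V F -> maxdeg V F v ->
    deg V v != 2 -> leads (V :\ v) (k - 1)%R F Vm Fp -> leads V k F (v |: Vm) Fp
| leads_step6 V k F v Vm Fp :
    (0 <= k)%R -> V != set0 -> no_low V -> no_two V F -> maxdeg V F v ->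
    deg V v != 2 -> leads V k (v |: F) Vm Fp -> leads V k F Vm (v |: Fp).

End NaiveFVS.

(* Main.v *)
Require Import Defs.
From mathcomp Require Import all_boot all_order all_algebra zify.
Set Implicit Arguments. Unset Strict Implicit. Unset Printing Implicit Defensive.

Section Proof6.
Variables (T : finType) (e : rel T).
Hypothesis e_sym : symmetric e.
Hypothesis e_irr : irreflexive e.

Local Notation deg := (deg e).

Lemma degE (V : {set T}) u : deg V u = \sum_(b in V) (e u b : nat).
Proof.
rewrite /Defs.deg -sum1_card big_mkcond /= [RHS]big_mkcond /=.
by apply: eq_bigr => b _; rewrite inE; case: (b \in V); case: (e u b).
Qed.

Lemma deg_sub (A B : {set T}) u : A \subset B -> deg A u <= deg B u.
Proof.
move=> AB; apply: subset_leq_card; apply/subsetP => y.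
by rewrite !inE => /andP[/(subsetP AB) -> ->].
Qed.

Lemma degID (A B : {set T}) u : deg A u = deg (A :&: B) u + deg (A :\: B) u.
Proof. by rewrite !degE (big_setID B). Qed.

Definition N (A B : {set T}) := \sum_(a in A) deg B a.

Lemma N_sym (A B : {set T}) : N A B = N B A.
Proof.
rewrite /N; under eq_bigr do rewrite degE.
rewrite exchange_big /=; apply: eq_bigr => b _; rewrite degE.
by apply: eq_bigr => a _; rewrite e_sym.
Qed.

Lemma deg_self_notin (A : {set T}) u : deg (A :\ u) u = deg A u.
Proof.
rewrite !degE; case: (boolP (u \in A)) => uA.
  by rewrite [in RHS](big_setD1 u uA) /= e_irr add0n.
by apply: eq_bigl => b; rewrite !inE; case: eqP => // ->; rewrite (negPf uA).
Qed.

Definition goodb (C : {set T}) := [forall y in C, 1 < deg C y].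

Lemma goodP (C : {set T}) : reflect (no_low e C) (goodb C).
Proof.
apply: (iffP forall_inP) => H u uC; exact: H.
Qed.

Definition core (V : {set T}) : {set T} :=
  [set u | [exists C : {set T}, [&& C \subset V, goodb C & u \in C]]].

Lemma core_sub (V : {set T}) : core V \subset V.
Proof.
apply/subsetP => u; rewrite inE => /existsP[C /and3P[CV _ uC]].
exact: (subsetP CV).
Qed.

Lemma core_max (V C : {set T}) : C \subset V -> no_low e C -> C \subset core V.
Proof.
move=> CV /goodP gC; apply/subsetP => u uC; rewrite inE.
by apply/existsP; exists C; rewrite CV gC uC.
Qed.

Lemma core_good (V : {set T}) : no_low e (core V).
Proof.
move=> u; rewrite inE => /existsP[C /and3P[CV /goodP gC uC]].
apply: leq_trans (gC u uC) _; apply: deg_sub.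
by apply: core_max.
Qed.

Lemma core_id (V : {set T}) : no_low e V -> core V = V.
Proof.
move=> gV; apply/eqP; rewrite eqEsubset core_sub /=.
exact: core_max.
Qed.

Lemma core_low (V : {set T}) u : deg V u < 2 -> core (V :\ u) = core V.
Proof.
move=> du.
have uc : u \notin core V.
  apply/negP => uc; have := core_good uc.
  have := deg_sub u (core_sub V); move: du; clear; lia.
apply/eqP; rewrite eqEsubset; apply/andP; split.
  apply: core_max; last exact: core_good.
  apply: subset_trans (core_sub _) _; exact: subsetDl.
apply: core_max; last exact: core_good.
apply/subsetP => y yc; rewrite !inE (subsetP (core_sub V) y yc) andbT.
by apply: contraNneq uc => <-.
Qed.

Lemma core_del (V : {set T}) x : core (V :\ x) = core (core V :\ x).
Proof.
apply/eqP; rewrite eqEsubset; apply/andP; split.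
  apply: core_max; last exact: core_good.
  have cVx : core (V :\ x) \subset core V.
    by apply: core_max; [apply: subset_trans (core_sub _) (subsetDl _ _)|exact: core_good].
  apply/subsetP => y yc; have := subsetP (core_sub _) y yc.
  by rewrite !in_setD1 (subsetP cVx y yc) andbT => /andP[].
apply: core_max; last exact: core_good.
apply: subset_trans (core_sub _) _; apply: setSD; exact: core_sub.
Qed.


Lemma deg_union_disj (P A : {set T}) u : [disjoint P & A] ->
  deg (P :|: A) u = deg P u + deg A u.
Proof.
move=> dPA; rewrite (degID (P :|: A) A) addnC setIUl (disjoint_setI0 dPA) setIid set0U.
by rewrite setDUl setDv setU0 (setDidPl dPA).
Qed.

Lemma peel (A : {set T}) n : forall P : {set T}, #|P| <= n -> [disjoint P & A] ->
  2 * #|P| < 2 * N P A + N P P ->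
  exists Q : {set T}, [/\ Q \subset P, Q != set0 & forall q, q \in Q -> 1 < deg (Q :|: A) q].
Proof.
elim: n => [|n IH] P.
  rewrite leqn0 cards_eq0 => /eqP -> _.
  by rewrite /N !big_set0.
move=> Pn dPA H.
case: (boolP [exists p in P, deg (P :|: A) p < 2]).
  move=> /exists_inP[p pP dp].
  set P' := P :\ p.
  have dP'A : [disjoint P' & A].
    by apply: disjointWl dPA; exact: subsetDl.
  have cP : #|P| = #|P'|.+1 by rewrite (cardsD1 p P) pP.
  have NA : N P A = deg A p + N P' A by rewrite /N (big_setD1 p pP).
  have NP : N P P = 2 * deg P' p + N P' P'.
    rewrite /N (big_setD1 p pP) /= -/(N P' P) N_sym /N (big_setD1 p pP) /=.
    by rewrite -/(N P' P') /P' deg_self_notin; lia.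
  have dd : deg P' p + deg A p <= deg (P :|: A) p.
    rewrite -deg_union_disj //; apply: deg_sub; apply: setSU; exact: subsetDl.
  have [Q [QP Q0 HQ]] : exists Q : {set T}, [/\ Q \subset P', Q != set0 &
      forall q, q \in Q -> 1 < deg (Q :|: A) q].
    apply: IH => //; first by move: Pn; rewrite cP.
    move: H; rewrite NA NP cP; lia.
  exists Q; split => //; apply: subset_trans QP _; exact: subsetDl.
move=> /exists_inPn Hall; exists P; split => //.
  apply/set0Pn; move: H; case: (set_0Vmem P) => [->|[p pP]]; last by exists p.
  by rewrite /N !big_set0.
by move=> q /Hall; rewrite -leqNgt.
Qed.

Lemma peel_core (C : {set T}) x :
  2 * N ((C :\ x) :\: core (C :\ x)) (core (C :\ x))
  + N ((C :\ x) :\: core (C :\ x)) ((C :\ x) :\: core (C :\ x))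
  <= 2 * #|(C :\ x) :\: core (C :\ x)|.
Proof.
set C' := core (C :\ x); set P := (C :\ x) :\: C'; rewrite leqNgt; apply/negP => H.
have dPC : [disjoint P & C'].
  rewrite -setI_eq0; apply/eqP/setP => y; rewrite /P in_setI in_setD in_set0.
  by case: (y \in C'); rewrite ?andbF.
have [Q [QP Q0 HQ]] := peel (leqnn #|P|) dPC H.
have gQ : no_low e (Q :|: C').
  move=> u; rewrite inE => /orP[uQ|uC]; first exact: HQ.
  apply: leq_trans (core_good uC) _; apply: deg_sub; exact: subsetUr.
have sub : Q :|: C' \subset C :\ x.
  rewrite subUset core_sub andbT; apply: subset_trans QP _; exact: subsetDl.
have := core_max sub gQ; rewrite -/C' subUset => /andP[QC _].
case/set0Pn: Q0 => q qQ.
by move: (subsetP QP q qQ) (subsetP QC q qQ); rewrite inE => /andP[/negP].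
Qed.

Lemma deg_set1 (x u : T) : deg [set x] u = e u x.
Proof. by rewrite degE big_set1. Qed.

Lemma loss_sum (C : {set T}) x : no_low e C -> x \in C ->
  \sum_(u in C :\ x)
     (deg C u - (if u \in core (C :\ x) then deg (core (C :\ x)) u else 2))
  <= deg C x.
Proof.
move=> gC xC.
have pc := peel_core C x.
set C' := core (C :\ x) in pc *; set P := (C :\ x) :\: C' in pc *.
have sC' : C' \subset C :\ x by exact: core_sub.
have dec u : deg C u = deg C' u + deg P u + e u x.
  rewrite (degID C [set x]) addnC (setIidPr _); last by rewrite sub1set.
  rewrite deg_set1 (degID (C :\: [set x]) C') (setIidPr sC'); done.
rewrite (big_setID C') /= (setIidPr sC').
have E1 : \sum_(u in C') (deg C u - (if u \in C' then deg C' u else 2))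
        = N C' P + \sum_(u in C') (e u x : nat).
  rewrite /N -big_split /=; apply: eq_bigr => u uC; rewrite uC dec; lia.
have E2 : \sum_(u in P) (deg C u - (if u \in C' then deg C' u else 2)) + 2 * #|P|
        = N P C' + N P P + \sum_(u in P) (e u x : nat).
  rewrite -sum1_card big_distrr /= -big_split /= /N -!big_split /=.
  apply: eq_bigr => u; rewrite /P in_setD => /andP[/negPf -> uCx].
  have := gC u (subsetP (subsetDl C [set x]) u uCx); rewrite dec -/P; lia.
have E3 : \sum_(u in C') (e u x : nat) + \sum_(u in P) (e u x : nat) = deg C x.
  rewrite -(setIidPr sC') -big_setID /= -deg_self_notin degE.
  by apply: eq_bigr => u _; rewrite e_sym.
rewrite E1 -/P; move: E2 E3 pc; rewrite (N_sym C' P); lia.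
Qed.

Local Open Scope ring_scope.
Import Order.TTheory GRing.Theory Num.Theory.

Lemma div_mono (n j k : nat) : (0 < j)%N -> (j <= k)%N ->
  (n%:R / k%:R : rat) <= n%:R / j%:R.
Proof.
move=> j0 jk; have k0 : (0 < k)%N by apply: leq_trans jk.
rewrite ler_pdivrMr ?ltr0n // mulrAC ler_pdivlMr ?ltr0n //.
by rewrite -!natrM ler_nat leq_mul.
Qed.

Definition Psi (C F : {set T}) (D : T -> nat) : rat :=
  \sum_(f in F :&: C) (deg C f - 2)%:R / (D f - 2)%:R.

Lemma del_loss (C F : {set T}) (D : T -> nat) x :
  no_low e C -> x \in C -> x \notin F ->
  (forall f, f \in F :&: C -> (3 <= D f)%N /\ (deg C x <= D f)%N) ->
  Psi C F D <= Psi (core (C :\ x)) F D + 3.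
Proof.
move=> gC xC xF HD.
have LS := loss_sum gC xC.
set C' := core (C :\ x) in LS *.
set l := fun u => (deg C u - (if u \in C' then deg C' u else 2))%N.
set m := maxn (deg C x) 3.
have sC' : C' \subset C :\ x by exact: core_sub.
have sC'C : C' \subset C by apply: subset_trans sC' (subsetDl _ _).
have term f : f \in F :&: C ->
    (deg C f - 2)%:R / (D f - 2)%:R
      - (if f \in C' then (deg C' f - 2)%:R / (D f - 2)%:R else 0)
    <= (l f)%:R / (m - 2)%:R :> rat.
  move=> fFC; have [D3 Dx] := HD f fFC.
  have fC : f \in C by move: fFC; rewrite inE => /andP[].
  have d2 := gC f fC.
  apply: le_trans (@div_mono (l f) (m - 2) (D f - 2) _ _); last 2 first.
  - rewrite /m; lia.
  - rewrite /m; lia.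
  rewrite /l; case: ifP => fC'.
    have d2' := core_good fC'.
    have dle := deg_sub f sC'C.
    have d2'' : (1 < deg C' f)%N by exact: d2'.
    rewrite -mulrBl -natrB; last lia.
    by rewrite (_ : (deg C f - 2 - (deg C' f - 2))%N = (deg C f - deg C' f)%N) //; lia.
  by rewrite subr0.
have E : Psi C F D - Psi C' F D =
   \sum_(f in F :&: C) ((deg C f - 2)%:R / (D f - 2)%:R
      - (if f \in C' then (deg C' f - 2)%:R / (D f - 2)%:R else 0)).
  rewrite sumrB; congr (_ - _).
  rewrite /Psi [RHS](big_setID C') /= [X in _ = _ + X]big1 ?addr0; last first.
    by move=> i; rewrite in_setD => /andP[/negPf ->].
  apply: eq_big => i; last by rewrite inE => /andP[_ ->].
  have := subsetP sC'C i; rewrite !in_setI.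
  by case: (i \in C'); case: (i \in C); case: (i \in F) => // /(_ isT).
have : Psi C F D - Psi C' F D <= 3.
  rewrite E; apply: le_trans (ler_sum _ term) _.
  apply: (@le_trans _ _ (\sum_(f in C :\ x) (l f)%:R / (m - 2)%:R)).
    rewrite [X in _ <= X](big_setID (F :&: C)) /=.
    rewrite [X in _ <= X + _](_ : _ = \sum_(f in F :&: C) (l f)%:R / (m - 2)%:R); last first.
      apply: eq_bigl => i; rewrite !inE; case iF: (i \in F); case iC: (i \in C);
        rewrite ?andbT ?andbF //=.
      by case: eqP => // ix; move: xF; rewrite -ix iF.
    rewrite lerDl; apply: sumr_ge0 => i _; apply: divr_ge0; exact: ler0n.
  rewrite -mulr_suml -natr_sum ler_pdivrMr ?ltr0n; last by rewrite /m; lia.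
  rewrite -(natrM _ 3) ler_nat; apply: leq_trans LS _; rewrite /m; lia.
by rewrite lerBlDl addrC.
Qed.

Lemma cycle_core (V : {set T}) c x : is_cycle e V c -> x \in c -> x \in core V.
Proof.
move=> /and4P[sz allV cyc uq] xc.
set S := [set y in c].
have SV : S \subset V.
  by apply/subsetP => y; rewrite inE => yc; move/allP: allV => /(_ y yc).
suff gS : no_low e S by apply: (subsetP (core_max SV gS)); rewrite inE.
move=> y; rewrite inE => yc.
case: (rot_to yc) => i s eq.
have cyc' : cycle e (y :: s) by rewrite -eq rot_cycle.
have uq' : uniq (y :: s) by rewrite -eq rot_uniq.
have mem' u : u \in s -> u \in c.
  by move=> us; rewrite -(mem_rot i) eq inE us orbT.
have szs : (1 < size s)%N by move: sz; rewrite -(size_rot i) eq /=.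
case: s eq cyc' uq' mem' szs => [|z1 [|a s2]] //= eq cyc' uq' mem' _.
set zl := last a s2.
have zls : zl \in a :: s2 by exact: mem_last.
move: cyc'; rewrite rcons_path /= => /and3P[ey1 _ ].
rewrite -/zl => /andP[_ eyl].
have z1l : z1 != zl.
  apply/negP => /eqP z1l; move: uq'; rewrite /= => /and3P[_ + _].
  by rewrite z1l zls.
have sub : [set z1; zl] \subset [set u in S | e y u].
  apply/subsetP => u; rewrite !inE => /orP[] /eqP ->.
    by rewrite mem' ?inE ?eqxx // ey1.
  rewrite mem' /=; first by rewrite e_sym.
  by rewrite in_cons zls orbT.
by have := subset_leq_card sub; rewrite cards2 z1l /Defs.deg.
Qed.

Lemma cycle_step (Q : {set T}) (y : T) (s : seq T) : no_low e Q ->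
  uniq (y :: s) -> path e y s -> all (mem Q) (y :: s) ->
  (exists c, is_cycle e Q c) \/ (exists z, [/\ z \in Q, e y z & z \notin y :: s]).
Proof.
move=> gQ uq pth alls.
have yQ : y \in Q by move/allP: alls => /(_ y (mem_head _ _)).
have [z [zQ eyz zh]] : exists z, [/\ z \in Q, e y z & z != head y s].
  have := gQ y yQ; rewrite /Defs.deg => /card_gt1P[a [b [aS bS ab]]].
  move: aS bS; rewrite !inE => /andP[aQ eya] /andP[bQ eyb].
  case: (eqVneq a (head y s)) => [ha|ha]; last by exists a.
  by exists b; split => //; rewrite -ha eq_sym.
case: (boolP (z \in y :: s)) => zin; last by right; exists z.
left.
have zy : z != y by apply: contraTneq eyz => ->; rewrite e_irr.
move: zin; rewrite in_cons (negPf zy) /= => zs.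
case/splitPr: zs uq pth alls zh => s1 s2 uq pth alls zh.
case: s1 uq pth alls zh => [|h s1] uq pth alls zh; first by rewrite eqxx in zh.
exists (y :: rcons (h :: s1) z); apply/and4P; split.
- by rewrite /= size_rcons.
- apply/allP => u uc; move/allP: alls; apply.
  move: uc; rewrite -cat_rcons -rcons_cons -cat_cons !mem_cat => ->; done.
- rewrite /= rcons_path last_rcons.
  move: pth; rewrite -cat_rcons cat_path /= => /andP[/andP[-> ->] _] /=.
  by rewrite e_sym.
- apply: subseq_uniq uq; rewrite -cat_rcons -rcons_cons -cat_cons.
  exact: prefix_subseq.
Qed.

Lemma cycle_exists_aux (Q : {set T}) : no_low e Q -> forall n (y : T) (s : seq T),
  (#|T| - size (y :: s) <= n)%N -> uniq (y :: s) -> path e y s ->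
  all (mem Q) (y :: s) -> exists c, is_cycle e Q c.
Proof.
move=> gQ; elim=> [|n IH] y s Hn uq pth alls;
  case: (cycle_step gQ uq pth alls) => // [[z [zQ eyz zin]]].
  have uq2 : uniq (z :: y :: s) by rewrite cons_uniq zin uq.
  have := max_card (mem (z :: y :: s)); rewrite (card_uniqP uq2) => szT.
  move: Hn szT; rewrite /=; lia.
have uq2 : uniq (z :: y :: s) by rewrite cons_uniq zin uq.
apply: (IH z (y :: s)) => //.
- have := max_card (mem (z :: y :: s)); rewrite (card_uniqP uq2) => szT.
  move: Hn szT; rewrite /=; lia.
- by rewrite /= e_sym eyz pth.
- by rewrite /= zQ.
Qed.

Lemma core_empty (V : {set T}) : (forall c, ~~ is_cycle e V c) -> core V = set0.
Proof.
move=> H; apply/eqP; apply: contraT => /set0Pn[y yc].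
have a0 : all (mem (core V)) [:: y] by rewrite /= yc.
have [c cc] := @cycle_exists_aux (core V) (@core_good V) _ y [::] (leqnn _) isT isT a0.
move: (H c); rewrite /is_cycle; case/and4P: cc => -> /allP Hall -> -> /=.
suff -> : all (mem V) c by [].
by apply/allP => u /Hall; apply: (subsetP (core_sub V)).
Qed.

Lemma loop_bound (F V X : {set T}) (D : T -> nat) : loop4 e F V X ->
  (forall f, f \in F :&: V -> (3 <= D f)%N) ->
  (forall w, w \in V :\: F -> (deg V w <= 2)%N) ->
  X \subset V /\ Psi (core V) F D <= 3 * #|X|%:R.
Proof.
elim=> {V X} [V nocyc|V c x X cyc xc xF _ IH] HD H2.
  by rewrite sub0set core_empty // /Psi setI0 big_set0 cards0 mulr0.
have [XV IHb] : X \subset V :\ x /\ Psi (core (V :\ x)) F D <= 3 * #|X|%:R.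
  apply: IH.
    by move=> f; rewrite !inE => /and3P[fF _ fV]; apply: HD; rewrite inE fF fV.
  move=> w; rewrite !inE => /and3P[wF _ wV].
  apply: leq_trans (deg_sub _ (subsetDl V [set x])) _; apply: H2.
  by rewrite inE wF wV.
have xV : x \in V.
  by case/and4P: cyc => _ /allP /(_ x xc).
have xX : x \notin X by apply/negP => /(subsetP XV); rewrite !inE eqxx.
split.
  rewrite subUset sub1set xV /=; apply: subset_trans XV _; exact: subsetDl.
have xc' := cycle_core cyc xc.
have := @del_loss (core V) F D x (@core_good V) xc' xF.
rewrite -core_del => L.
rewrite cardsU1 xX natrD mulrDr mulr1 addrC.
apply: le_trans (L _) _; last by rewrite lerD2r.
move=> f; rewrite in_setI => /andP[fF fc]; split.
  by apply: HD; rewrite in_setI fF (subsetP (core_sub V) f fc).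
apply: leq_trans (deg_sub _ (core_sub V)) _.
apply: leq_trans (H2 x _) _; first by rewrite inE xF xV.
by apply: leq_trans (HD f _); rewrite // in_setI fF (subsetP (core_sub V) f fc).
Qed.

Definition Inv (V F : {set T}) (D : T -> nat) := forall f, f \in F :&: V ->
  (3 <= D f)%N /\ forall w, w \in V :\: F -> (deg V w <= D f)%N.

Lemma Inv_del (V F : {set T}) D v : Inv V F D -> Inv (V :\ v) (F :\ v) D.
Proof.
move=> I f; rewrite !inE => /andP[/andP[_ fF] /andP[_ fV]].
have fFV : f \in F :&: V by rewrite inE fF fV.
have [D3 Dw] := I f fFV; split => // w.
rewrite !inE => /andP[wF /andP[wv wV]].
apply: leq_trans (deg_sub _ (subsetDl V [set v])) _; apply: Dw.
by rewrite inE wV andbT; move: wF; rewrite wv.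
Qed.

Lemma Inv_del2 (V F : {set T}) D v : Inv V F D -> Inv (V :\ v) F D.
Proof.
move=> I f; rewrite !inE => /andP[fF /andP[_ fV]].
have fFV : f \in F :&: V by rewrite inE fF fV.
have [D3 Dw] := I f fFV; split => // w.
rewrite !inE => /andP[wF /andP[wv wV]].
apply: leq_trans (deg_sub _ (subsetDl V [set v])) _; apply: Dw.
by rewrite inE wV wF.
Qed.

Lemma del_step (V F : {set T}) D v (Vm Fp : {set T}) : Inv V F D -> no_low e V -> v \in V :\: F ->
  Vm \subset V :\ v /\ #|Fp|%:R + Psi (core (V :\ v)) F D <= 3 * #|Vm|%:R ->
  v |: Vm \subset V /\ #|Fp|%:R + Psi (core V) F D <= 3 * #|v |: Vm|%:R.
Proof.
move=> I gV; rewrite inE => /andP[vF vV] [VmV IHb].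
have vVm : v \notin Vm by apply/negP => /(subsetP VmV); rewrite !inE eqxx.
split.
  rewrite subUset sub1set vV /=; apply: subset_trans VmV _; exact: subsetDl.
rewrite core_id //.
have := @del_loss V F D v gV vV vF.
have HD : forall f, f \in F :&: V -> (3 <= D f)%N /\ (deg V v <= D f)%N.
  move=> f fFV; have [D3 Dw] := I f fFV; split => //; apply: Dw.
  by rewrite inE vF vV.
move=> /(_ HD) L.
rewrite cardsU1 vVm natrD mulrDr mulr1.
apply: le_trans (lerD (lexx _) L) _.
by rewrite addrA [_ + 3]addrC lerD2l.
Qed.

Lemma main_ind (V : {set T}) k (F Vm Fp : {set T}) : leads e V k F Vm Fp ->
  forall D, Inv V F D ->
  Vm \subset V /\ #|Fp|%:R + Psi (core V) F D <= 3 * #|Vm|%:R.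
Proof.
elim=> {V k F Vm Fp}.
- move=> V k F _ -> D _.
  have -> : core set0 = set0 by apply/eqP; rewrite -subset0; exact: core_sub.
  by rewrite sub0set /Psi setI0 big_set0 cards0 mulr0 addr0.
- move=> V k F v Vm Fp _ _ vV dv _ IH D I.
  have [VmV IHb] := IH D (@Inv_del V F D v I).
  split; first by apply: subset_trans VmV _; exact: subsetDl.
  rewrite core_low // in IHb.
  have vc : v \notin core V.
    apply/negP => vc; have := core_good vc.
    have := deg_sub v (core_sub V); move: dv; clear; lia.
  suff <- : Psi (core V) (F :\ v) D = Psi (core V) F D by [].
  rewrite /Psi; apply: eq_bigl => u; rewrite !in_setI in_setD1.
  by case: eqP => [->|_] /=; rewrite ?(negPf vc) ?andbF.
- move=> V k F v Vm Fp _ _ gV vVF _ _ IH D I.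
  apply: del_step => //; apply: IH; exact: (@Inv_del2 V F D v I).
- move=> V k F v X _ _ gV _ [vVF mx] dv lp _ D I.
  have H3 : forall f, f \in F :&: V -> (3 <= D f)%N by move=> f /I [].
  have H2 : forall w, w \in V :\: F -> (deg V w <= 2)%N by move=> w /mx; rewrite dv.
  have [XV Hb] := @loop_bound F V X D lp H3 H2.
  by rewrite XV cards0 add0r.
- move=> V k F v Vm Fp _ _ gV _ [vVF _] _ _ IH D I.
  apply: del_step => //; apply: IH; exact: (@Inv_del2 V F D v I).
- move=> V k F v Vm Fp _ _ gV _ [vVF mx] dv2 _ IH D I.
  move: (vVF); rewrite inE => /andP[vF vV].
  have dv3 : (3 <= deg V v)%N by have := gV v vV; move: dv2; lia.
  set D' := fun u => if u == v then deg V v else D u.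
  have I' : Inv V (v |: F) D'.
    move=> f; rewrite in_setI in_setU1 => /andP[/orP[/eqP ->|fF] fV].
      rewrite /D' eqxx; split => // w; rewrite in_setD in_setU1 negb_or => /andP[/andP[_ wF] wV].
      by apply: mx; rewrite inE wF wV.
    have fv : f != v by apply: contraNneq vF => <-.
    have fFV : f \in F :&: V by rewrite inE fF fV.
    have [D3 Dw] := I f fFV.
    rewrite /D' (negPf fv); split => // w.
    rewrite in_setD in_setU1 negb_or => /andP[/andP[_ wF] wV].
    by apply: Dw; rewrite inE wF wV.
  have [VmV IHb] := IH D' I'.
  split => //.
  have EP : Psi (core V) (v |: F) D' = Psi (core V) F D + 1.
    rewrite core_id // /Psi.
    have -> : (v |: F) :&: V = v |: (F :&: V).
      by rewrite setIUl (setIidPl _) // sub1set.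
    rewrite big_setU1 /=; last by rewrite inE (negPf vF).
    rewrite addrC; congr (_ + _).
      apply: eq_bigr => f; rewrite inE => /andP[fF _].
      have fv : f != v by apply: contraNneq vF => <-.
      by rewrite /D' (negPf fv).
    rewrite /D' eqxx divff // pnatr_eq0; move: dv3; clear; lia.
  rewrite EP in IHb; apply: le_trans IHb.
  rewrite cardsU1 natrD addrA [_ + 1]addrC -addrA lerD2r.
  by case: (v \notin Fp); rewrite /= ?ler01 ?lexx.
Qed.
End Proof6.

Theorem mainTheorem6 (T : finType) (e : rel T) (e_sym : symmetric e)
  (e_irr : irreflexive e) (k : int) (Vm Fp : {set T}) :
  leads e [set: T] k set0 Vm Fp -> #|Fp| <= 3 * #|Vm|.
Proof.
move=> H.
have I : Inv e [set: T] set0 (fun _ => 0%N).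
  by move=> f; rewrite set0I inE.
have [_ Hb] := main_ind e_sym e_irr H I.
move: Hb; rewrite /Psi set0I big_set0 GRing.addr0.
by rewrite -(@GRing.natrM rat) Num.Theory.ler_nat.
Qed.
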